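(* Let $m\ge2$ be even. For integers $i\ge0$ and even $n\ge 2$ define, as functions of $(s,t)$, $$\tilde f_n^i(s,t)=-\sqrt{\tfrac{\pi}{2}}\sum_{\ell=0}^{\lfloor (i-1)/2\rfloor}s^{i-1-2\ell}\frac{1}{2^\ell\ell!}\frac{\Gamma(i+1)}{\Gamma(i-2\ell)}\widetilde J_{(n-2\ell-3)/2}(t)\quad(i\ge1),$$ $$\hat f_n^i(s,t)=(-1)^{n/2+i}\sqrt{\tfrac{\pi}{2}}\sum_{\ell=0}^{\lfloor i/2\rfloor}s^{i-2\ell}\frac{1}{2^\ell\ell!}\frac{\Gamma(i+1)}{\Gamma(i+1-2\ell)}\widetilde J_{(n-2\ell-3)/2}(t),$$ $$g_n^i(s,t)=\sqrt{\tfrac{\pi}{2}}\sum_{\ell=0}^{\lfloor i/2\rfloor}s^{i-2\ell}\frac{1}{2^\ell\ell!}\frac{\Gamma(i+1)}{\Gamma(i+1-2\ell)}\widetilde J_{(n-2\ell-1)/2}(t).$$ Then for every $i$ with $1\le i\le m-2$, $$\tilde f_{m+2}^{i+1}=\frac{i+1}{i}z^{-1}\partial_w\tilde f_m^i,\qquad \hat f_{m+2}^{i+1}=z^{-1}\partial_w\hat f_m^i,\qquad g_{m+2}^{i+1}=-\frac{1}{i+1}z^{-1}\partial_w\tilde f_{m+2}^{i+1},$$ and moreover $$\hat f_{m+2}^1=z^{-1}\partial_w\hat f_m^0,\qquad \tilde f_{m+2}^1=(-1)^{m/2-1}s^{-1}\hat f_{m+2}^1,\qquad g_{m+2}^1=-z^{-1}\partial_w\tilde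 f_{m+2}^1.$$
   Context: $\widetilde J_\alpha(t)=t^{-\alpha}J_\alpha(t)$ with $J_\alpha$ the Bessel function (for $\alpha\ge-1/2$ this is an entire even function of $t$). The variables are related by $s=zw$ and $t=z\sqrt{1-w^2}$, where (in the application) $s=\langle\underline{x},\underline{y}\rangle$, $t=|\underline{x}\wedge\underline{y}|=\sqrt{|\underline{x}|^2|\underline{y}|^2-s^2}$, $z=|\underline{x}||\underline{y}|$, $w=\langle\underline{x}/|\underline{x}|,\underline{y}/|\underline{y}|\rangle$. The operator $z^{-1}\partial_w$ means: regard a function of $(s,t)$ as a function of $(w,z)$ via these substitutions, differentiate with respect to $w$ at fixed $z$, and divide by $z$. *)

(* Defs.v *)
From Stdlib Require Import Reals Lra Lia ZArith List.
From Coquelicot Require Import Coquelicot.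
Open Scope R_scope.

Definition sumR (N : nat) (f : nat -> R) : R :=
  fold_right Rplus 0 (map f (seq 0 N)).

(* Euler's Gamma at half-integers:  GammaH j = Gamma(j + 1/2), j : Z,
   determined by Gamma(1/2) = sqrt pi and Gamma(x+1) = x Gamma(x)
   (half-integers are never poles). *)
Fixpoint GammaH_pos (n : nat) : R :=
  match n with
  | O => sqrt PI
  | S n' => (INR n' + /2) * GammaH_pos n'
  end.
Fixpoint GammaH_neg (n : nat) : R :=       (* Gamma(1/2 - n) *)
  match n with
  | O => sqrt PI
  | S n' => GammaH_neg n' / (/2 - INR (S n'))
  end.
Definition GammaH (j : Z) : R :=
  if (0 <=? j)%Z then GammaH_pos (Z.to_nat j) else GammaH_neg (Z.to_nat (- j)).

(* Jtil q t = t^{-alpha} J_alpha(t) with alpha = q - 1/2, given by its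
   (entire, even) power series
     sum_k (-1)^k t^{2k} / (2^{2k+alpha} k! Gamma(k+alpha+1)),
   where Gamma(k+alpha+1) = Gamma((k+q) + 1/2) = GammaH (k+q). *)
Definition Jtil (q : Z) (t : R) : R :=
  Series (fun k : nat =>
    (-1) ^ k * t ^ (2 * k)
    / (Rpower 2 (2 * INR k + IZR q - /2) * INR (fact k) * GammaH (Z.of_nat k + q))).

(* Bessel index (n - 2l - 3)/2 = q - 1/2 with q = n/2 - l - 1 (n even). *)
Definition qA (n l : nat) : Z := (Z.of_nat (Nat.div2 n) - Z.of_nat l - 1)%Z.
(* Bessel index (n - 2l - 1)/2 = q - 1/2 with q = n/2 - l (n even). *)
Definition qB (n l : nat) : Z := (Z.of_nat (Nat.div2 n) - Z.of_nat l)%Z.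

(* Gamma(i+1)/Gamma(i-2l) = i!/(i-1-2l)!  (the index l ranges over
   0 <= l <= floor((i-1)/2), i.e. l < (i+1)/2 in nat; empty for i = 0). *)
Definition ftil (n i : nat) (s t : R) : R :=
  - sqrt (PI / 2) *
  sumR (Nat.div2 (i + 1)) (fun l =>
    s ^ (i - 1 - 2 * l) * / (2 ^ l * INR (fact l))
    * (INR (fact i) / INR (fact (i - 1 - 2 * l))) * Jtil (qA n l) t).

(* l ranges over 0 <= l <= floor(i/2), i.e. l < i/2 + 1;
   Gamma(i+1)/Gamma(i+1-2l) = i!/(i-2l)!. *)
Definition fhat (n i : nat) (s t : R) : R :=
  (-1) ^ (Nat.div2 n + i) * sqrt (PI / 2) *
  sumR (S (Nat.div2 i)) (fun l =>
    s ^ (i - 2 * l) * / (2 ^ l * INR (fact l))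
    * (INR (fact i) / INR (fact (i - 2 * l))) * Jtil (qA n l) t).

Definition gfun (n i : nat) (s t : R) : R :=
  sqrt (PI / 2) *
  sumR (S (Nat.div2 i)) (fun l =>
    s ^ (i - 2 * l) * / (2 ^ l * INR (fact l))
    * (INR (fact i) / INR (fact (i - 2 * l))) * Jtil (qB n l) t).

(* A function of (s,t) seen as a function of (z,w) via
   s = z w, t = z sqrt(1 - w^2). *)
Definition polar (F : R -> R -> R) (z w : R) : R :=
  F (z * w) (z * sqrt (1 - w ^ 2)).

Definition zDw (F : R -> R -> R) (z w : R) : R :=
  / z * Derive (fun w' => polar F z w') w.

(* Main.v *)
Require Import Defs.
From Stdlib Require Import Reals Lra Lia ZArith List.
From Coquelicot Require Import Coquelicot.
Open Scope R_scope.

Lemma GammaH_pos_pos n : 0 < GammaH_pos n.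
Proof.
  induction n; simpl. apply sqrt_lt_R0, PI_RGT_0.
  apply Rmult_lt_0_compat; auto. pose proof (pos_INR n); lra.
Qed.

Lemma GammaH_neg_nz n : GammaH_neg n <> 0.
Proof.
  induction n; simpl. pose proof (sqrt_lt_R0 PI PI_RGT_0); lra.
  assert (H: / 2 - INR (S n) <> 0) by (rewrite S_INR; pose proof (pos_INR n); lra).
  unfold Rdiv. apply Rmult_integral_contrapositive; split; auto.
  apply Rinv_neq_0_compat; auto.
Qed.

Lemma GammaH_nz j : GammaH j <> 0.
Proof.
  unfold GammaH. destruct (0 <=? j)%Z. pose proof (GammaH_pos_pos (Z.to_nat j)); lra.
  apply GammaH_neg_nz.
Qed.

Lemma GammaH_negE n : GammaH (- Z.of_nat n) = GammaH_neg n.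
Proof.
  unfold GammaH. destruct n. reflexivity.
  replace (0 <=? - Z.of_nat (S n))%Z with false by (symmetry; apply Z.leb_gt; lia).
  f_equal; lia.
Qed.

Lemma GammaH_rec j : GammaH (j + 1) = (IZR j + /2) * GammaH j.
Proof.
  destruct (Z_le_gt_dec 0 j).
  - destruct (Z_of_nat_complete j l) as [n ->].
    unfold GammaH. replace (0 <=? Z.of_nat n + 1)%Z with true by (symmetry; apply Z.leb_le; lia).
    replace (0 <=? Z.of_nat n)%Z with true by (symmetry; apply Z.leb_le; lia).
    replace (Z.to_nat (Z.of_nat n + 1)) with (S n) by lia.
    rewrite Nat2Z.id. simpl. rewrite <- INR_IZR_INZ. reflexivity.
  - assert (exists n, j = - Z.of_nat (S n))%Z as [n ->] by (exists (Z.to_nat (-j) - 1)%nat; lia).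
    replace (- Z.of_nat (S n) + 1)%Z with (- Z.of_nat n)%Z by lia.
    rewrite !GammaH_negE. change (GammaH_neg (S n)) with (GammaH_neg n / (/2 - INR (S n))).
    rewrite opp_IZR, <- INR_IZR_INZ.
    assert (H: / 2 - INR (S n) <> 0) by (rewrite S_INR; pose proof (pos_INR n); lra).
    field. rewrite S_INR; pose proof (pos_INR n); lra.
Qed.

Definition jc (q : Z) (k : nat) : R :=
  (-1) ^ k / (Rpower 2 (2 * INR k + IZR q - /2) * INR (fact k) * GammaH (Z.of_nat k + q)).

Lemma Rpower_nz x : Rpower 2 x <> 0.
Proof. unfold Rpower. pose proof (exp_pos (x * ln 2)); lra. Qed.

Lemma jc_nz q k : jc q k <> 0.
Proof.
  unfold jc, Rdiv. apply Rmult_integral_contrapositive; split.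
  apply pow_nonzero; lra.
  apply Rinv_neq_0_compat. apply Rmult_integral_contrapositive; split; [apply Rmult_integral_contrapositive; split|].
  apply Rpower_nz. apply INR_fact_neq_0. apply GammaH_nz.
Qed.

Lemma Rpower_S k q : Rpower 2 (2 * INR (S k) + IZR q - /2) = 4 * Rpower 2 (2 * INR k + IZR q - /2).
Proof.
  replace (2 * INR (S k) + IZR q - /2) with (2 + (2 * INR k + IZR q - /2)) by (rewrite S_INR; ring).
  rewrite Rpower_plus. f_equal. replace 2 with (1+1) at 2 by ring.
  rewrite Rpower_plus, Rpower_1 by lra. ring.
Qed.

Lemma Rpower_q1 k q : Rpower 2 (2 * INR (S k) + IZR q - /2) = 2 * Rpower 2 (2 * INR k + IZR (q+1) - /2).
Proof.
  replace (2 * INR (S k) + IZR q - /2) with (1 + (2 * INR k + IZR (q+1) - /2)) by (rewrite S_INR, plus_IZR; ring).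
  rewrite Rpower_plus, Rpower_1 by lra. reflexivity.
Qed.

Lemma jc_ratio q k : jc q (S k) / jc q k = - / (4 * INR (S k) * (INR k + IZR q + /2)).
Proof.
  unfold jc. rewrite Rpower_S.
  replace (Z.of_nat (S k) + q)%Z with ((Z.of_nat k + q) + 1)%Z by lia.
  rewrite GammaH_rec, plus_IZR, <- INR_IZR_INZ.
  pose proof (Rpower_nz (2 * INR k + IZR q - / 2)).
  pose proof (GammaH_nz (Z.of_nat k + q)).
  pose proof (INR_fact_neq_0 k).
  destruct (Req_dec (INR k + IZR q + /2) 0) as [E|E].
  { exfalso. (* k + q integer *)
    rewrite INR_IZR_INZ, <- plus_IZR in E.
    assert (E2: 2 * IZR (Z.of_nat k + q) + 1 = 0) by lra.
    rewrite <- (mult_IZR 2), <- plus_IZR in E2. apply eq_IZR in E2. lia. }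
  change (fact (S k)) with (S k * fact k)%nat. rewrite mult_INR.
  change ((-1)^(S k)) with (-1 * (-1)^k).
  pose proof (pow_nonzero (-1) k ltac:(lra)).
  rewrite S_INR in *.
  pose proof (pos_INR k).
  field. repeat split; auto; lra.
Qed.

Lemma lim_INR_plus c : is_lim_seq (fun n => INR n + c) p_infty.
Proof.
  eapply is_lim_seq_plus. apply is_lim_seq_INR. apply is_lim_seq_const. simpl. easy.
Qed.

Lemma jc_CV q : CV_radius (jc q) = p_infty.
Proof.
  apply CV_radius_infinite_DAlembert. apply jc_nz.
  apply is_lim_seq_ext with (fun n => Rabs (- / ((4 * (INR n + 1)) * (INR n + (IZR q + /2))))).
  { intros n. rewrite jc_ratio, S_INR. f_equal. f_equal. f_equal. ring. }
  replace (Finite 0) with (Rbar_abs (Finite 0)) by (simpl; rewrite Rabs_R0; auto).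
  apply is_lim_seq_abs.
  replace (Finite 0) with (Rbar_opp 0) by (simpl; f_equal; ring).
  apply -> is_lim_seq_opp.
  replace (Finite 0) with (Rbar_inv p_infty) by reflexivity.
  apply is_lim_seq_inv; [|easy].
  eapply is_lim_seq_mult; [| apply lim_INR_plus | ].
  eapply is_lim_seq_mult; [apply is_lim_seq_const | apply lim_INR_plus |].
  simpl. unfold is_Rbar_mult, Rbar_mult'. simpl. destruct (Rle_dec 0 4); try lra.
  destruct (Rle_lt_or_eq_dec 0 4 r); try lra. reflexivity.
unfold is_Rbar_mult; reflexivity. Qed.

Lemma Jtil_PS q t : Jtil q t = PSeries (jc q) (t^2).
Proof.
  unfold Jtil, PSeries. apply Series_ext. intro k.
  unfold jc.
  rewrite pow_mult. unfold Rdiv. ring.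
Qed.

Lemma jc_deriv q n : PS_derive (jc q) n = PS_scal (-/2) (jc (q+1)) n.
Proof.
  unfold PS_derive, PS_scal. change (scal (-/2) (jc (q+1) n)) with (-/2 * jc (q+1) n). unfold jc.
  rewrite Rpower_q1.
  replace (Z.of_nat (S n) + q)%Z with (Z.of_nat n + (q + 1))%Z by lia.
  change (fact (S n)) with (S n * fact n)%nat. rewrite mult_INR.
  change ((-1)^(S n)) with (-1 * (-1)^n).
  pose proof (Rpower_nz (2 * INR n + IZR (q+1) - / 2)).
  pose proof (GammaH_nz (Z.of_nat n + (q+1))).
  pose proof (INR_fact_neq_0 n).
  pose proof (pos_INR n). rewrite S_INR.
  field. repeat split; auto; lra.
Qed.

Lemma Jtil_deriv q t : is_derive (Jtil q) t (- t * Jtil (q+1) t).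
Proof.
  apply is_derive_ext with (fun t => PSeries (jc q) (t^2)).
  { intro; symmetry; apply Jtil_PS. }
  assert (Hg: is_derive (fun t : R => t^2) t (2*t)) by (auto_derive; auto; ring).
  replace (- t * Jtil (q+1) t) with (scal (2*t) (PSeries (PS_derive (jc q)) (t^2))).
  - apply (is_derive_comp (PSeries (jc q)) (fun t => t^2)).
    + apply is_derive_PSeries. rewrite jc_CV. easy.
    + exact Hg.
  - rewrite (PSeries_ext _ _ _ (jc_deriv q)), PSeries_scal, <- Jtil_PS.
    unfold scal; simpl; unfold mult; simpl. field.
Qed.

Lemma fold_Rplus_acc l x : fold_right Rplus x l = fold_right Rplus 0 l + x.
Proof. induction l; simpl. ring. rewrite IHl. ring. Qed.

Lemma sumR_0 f : sumR 0 f = 0.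
Proof. reflexivity. Qed.

Lemma sumR_S N f : sumR (S N) f = sumR N f + f N.
Proof.
  unfold sumR. rewrite seq_S, map_app, fold_right_app. simpl.
  rewrite fold_Rplus_acc. ring.
Qed.

Lemma sumR_shift N f : sumR (S N) f = f 0%nat + sumR N (fun l => f (S l)).
Proof.
  unfold sumR. simpl. f_equal. rewrite <- seq_shift, map_map. reflexivity.
Qed.

Lemma sumR_ext N f g : (forall l, (l < N)%nat -> f l = g l) -> sumR N f = sumR N g.
Proof.
  induction N; intros H. reflexivity.
  rewrite !sumR_S, IHN by (intros; apply H; lia). rewrite H by lia. reflexivity.
Qed.

Lemma sumR_plus N f g : sumR N (fun l => f l + g l) = sumR N f + sumR N g.
Proof. induction N. simpl; unfold sumR; simpl; ring. rewrite !sumR_S, IHN. ring. Qed.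

Lemma sumR_scal N c f : sumR N (fun l => c * f l) = c * sumR N f.
Proof. induction N. unfold sumR; simpl; ring. rewrite !sumR_S, IHN. ring. Qed.

Lemma sumR_tail N M f : (N <= M)%nat -> (forall l, (N <= l < M)%nat -> f l = 0) -> sumR M f = sumR N f.
Proof.
  intros HNM. induction M; intros H.
  - replace N with 0%nat by lia. reflexivity.
  - destruct (Nat.eq_dec N (S M)) as [->|ne]. reflexivity.
    rewrite sumR_S, IHM by (try lia; intros; apply H; lia). rewrite H by lia. ring.
Qed.

Lemma sumR_derive N (f : nat -> R -> R) (d : nat -> R) w :
  (forall l, (l < N)%nat -> is_derive (f l) w (d l)) ->
  is_derive (fun x => sumR N (fun l => f l x)) w (sumR N d).
Proof.
  induction N; intros H.
  - unfold sumR; simpl. auto_derive; auto.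
  - rewrite sumR_S. apply is_derive_ext with (fun x => sumR N (fun l => f l x) + f N x).
    { intro; symmetry; apply sumR_S. }
    apply (is_derive_plus (fun x => sumR N (fun l => f l x)) (f N)).
    apply IHN; intros; apply H; lia. apply H; lia.
Qed.

Lemma factS n : INR (fact (S n)) = (INR n + 1) * INR (fact n).
Proof. change (fact (S n)) with (S n * fact n)%nat. rewrite mult_INR, S_INR. reflexivity. Qed.

Definition A (j l : nat) : R :=
  if (2 * l <=? j)%nat then / (2 ^ l * INR (fact l)) * (INR (fact j) / INR (fact (j - 2 * l))) else 0.

Lemma A_in j l : (2 * l <= j)%nat -> A j l = / (2 ^ l * INR (fact l)) * (INR (fact j) / INR (fact (j - 2 * l))).
Proof. intro H. unfold A. apply Nat.leb_le in H. rewrite H. reflexivity. Qed.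

Lemma A_out j l : (j < 2 * l)%nat -> A j l = 0.
Proof. intro H. unfold A. replace (2 * l <=? j)%nat with false. reflexivity. symmetry; apply Nat.leb_gt; lia. Qed.

Lemma A_0 j : A j 0 = 1.
Proof. rewrite A_in by lia. replace (j - 2*0)%nat with j by lia. simpl. pose proof (INR_fact_neq_0 j). field. auto. Qed.

Lemma A_id j l s :
  A (S j) (S l) * s ^ (S j - 2 * S l) =
  A j l * INR (j - 2 * l) * s ^ (pred (j - 2 * l)) + A j (S l) * s ^ (S (j - 2 * S l)).
Proof.
  destruct (le_lt_dec (2 * l + 1) j) as [Hl|Hl].
  - destruct (Nat.eq_dec j (2*l+1)) as [->|Hne].
    + rewrite (A_out (2*l+1) (S l)) by lia. rewrite !A_in by lia.
      replace (S (2 * l + 1) - 2 * S l)%nat with 0%nat by lia.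
      replace (2 * l + 1 - 2 * l)%nat with 1%nat by lia.
      replace (S (2 * l + 1)) with (S (S (2*l))) by lia.
      replace (2 * l + 1)%nat with (S (2*l)) by lia.
      change (fact (S (S (2 * l)))) with (S (S (2*l)) * fact (S (2 * l)))%nat.
      change (fact (S l)) with (S l * fact l)%nat.
      rewrite !mult_INR. simpl pow. simpl fact. simpl INR at 4.
      rewrite !S_INR, !mult_INR.
      pose proof (INR_fact_neq_0 l). pose proof (INR_fact_neq_0 (S (2*l))).
      pose proof (pow_lt 2 l ltac:(lra)). pose proof (pos_INR l). simpl INR.
      field. lra.
    + assert (exists r, j = 2*l+2+r)%nat as [r ->] by (exists (j - (2*l+2))%nat; lia).
      rewrite !A_in by lia.
      replace (S (2 * l + 2 + r) - 2 * S l)%nat with (S r) by lia.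
      replace (2 * l + 2 + r - 2 * l)%nat with (S (S r)) by lia.
      replace (2 * l + 2 + r - 2 * S l)%nat with r by lia.
      simpl pred. rewrite !factS. change (2^(S l)) with (2 * 2^l).
      rewrite !plus_INR, !mult_INR. rewrite ?S_INR. simpl INR.
      pose proof (INR_fact_neq_0 l). pose proof (INR_fact_neq_0 r).
      pose proof (INR_fact_neq_0 (2*l+2+r)).
      pose proof (pow_lt 2 l ltac:(lra)). pose proof (pos_INR l). pose proof (pos_INR r).
      field. repeat split; auto; lra.
  - rewrite (A_out (S j) (S l)) by lia. rewrite (A_out j (S l)) by lia.
    destruct (le_lt_dec (2*l) j).
    + replace (j - 2 * l)%nat with 0%nat by lia. simpl. ring.
    + rewrite A_out by lia. ring.
Qed.

Lemma term_deriv z w a q : -1 < w < 1 ->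
  is_derive (fun w' => (z * w') ^ a * Jtil q (z * sqrt (1 - w' ^ 2))) w
    (z * (INR a * (z * w) ^ (pred a) * Jtil q (z * sqrt (1 - w ^ 2))
          + (z * w) ^ (S a) * Jtil (q + 1) (z * sqrt (1 - w ^ 2)))).
Proof.
  intros Hw.
  assert (Hp : 0 < 1 - w ^ 2) by nra.
  pose proof (sqrt_lt_R0 _ Hp) as Hs.
  assert (Hh : is_derive (fun w' => z * sqrt (1 - w' ^ 2)) w (z * (- w / sqrt (1 - w ^ 2)))).
  { auto_derive. lra. replace (1 + - (w*(w*1))) with (1 - w^2) by ring. field. lra. }
  assert (Hf : is_derive (fun w' => (z * w') ^ a) w (INR a * z * (z * w) ^ pred a)).
  { apply is_derive_pow. auto_derive; auto; ring. }
  pose proof (is_derive_comp (Jtil q) (fun w' => z * sqrt (1 - w' ^ 2)) w _ _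
      (Jtil_deriv q (z * sqrt (1 - w ^ 2))) Hh) as Hg.
  pose proof (is_derive_mult _ _ w _ _ Hf Hg ltac:(intros; apply Rmult_comm)) as Hm.
  match type of Hm with is_derive _ _ ?D => replace (z * (INR a * (z * w) ^ (pred a) * Jtil q (z * sqrt (1 - w ^ 2))
          + (z * w) ^ (S a) * Jtil (q + 1) (z * sqrt (1 - w ^ 2)))) with D end.
  - exact Hm.
  - unfold plus, mult, scal; simpl; unfold mult, plus; simpl.
    change ((z*w)^(S a)) with (z*w*(z*w)^a). field. replace (w * (w * 1)) with (w^2) by ring. lra.
Qed.

Definition Sfun (n j : nat) (s t : R) : R :=
  sumR (S j) (fun l => A j l * s ^ (j - 2 * l) * Jtil (qA n l) t).
Definition PSf (n j : nat) (z w : R) : R := Sfun n j (z * w) (z * sqrt (1 - w ^ 2)).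

Lemma div2_SS n : Nat.div2 (n + 2) = S (Nat.div2 n).
Proof. replace (n + 2)%nat with (S (S n)) by lia. reflexivity. Qed.

Lemma qA_1 n l : (qA n l + 1)%Z = qA (n + 2) l.
Proof. unfold qA. rewrite div2_SS. lia. Qed.
Lemma qA_S n l : qA n l = qA (n + 2) (S l).
Proof. unfold qA. rewrite div2_SS. lia. Qed.

Lemma alg j s (K : nat -> R) :
  sumR (S (S j)) (fun l => A (S j) l * s ^ (S j - 2 * l) * K l) =
  sumR (S j) (fun l => A j l * INR (j - 2 * l) * s ^ (pred (j - 2 * l)) * K (S l)
                       + A j l * s ^ (S (j - 2 * l)) * K l).
Proof.
  rewrite sumR_shift, sumR_plus.
  rewrite (sumR_shift j (fun l => A j l * s ^ S (j - 2 * l) * K l)).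
  rewrite <- (sumR_tail j (S j) (fun l => A j (S l) * s ^ S (j - 2 * S l) * K (S l))).
  2: lia.
  2: { intros l Hl. rewrite A_out by lia. ring. }
  rewrite (sumR_ext _ _ (fun l => A j l * INR (j - 2 * l) * s ^ (pred (j - 2 * l)) * K (S l)
                       + A j (S l) * s ^ (S (j - 2 * S l)) * K (S l))).
  2: { intros l _. rewrite A_id. ring. }
  rewrite sumR_plus, !A_0. replace (S j - 2 * 0)%nat with (S j) by lia.
  replace (S (j - 2 * 0)) with (S j) by lia. ring.
Qed.

Lemma core n j z w : -1 < w < 1 ->
  is_derive (PSf n j z) w (z * PSf (n + 2) (S j) z w).
Proof.
  intros Hw. unfold PSf, Sfun.
  apply is_derive_ext with (fun w' => sumR (S j) (fun l => A j l * ((z * w') ^ (j - 2 * l) * Jtil (qA n l) (z * sqrt (1 - w' ^ 2))))).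
  { intro; apply sumR_ext; intros; ring. }
  rewrite alg, <- sumR_scal.
  apply sumR_derive. intros l _.
  match goal with |- is_derive _ _ ?D => replace D with
    (A j l * (z * (INR (j - 2*l) * (z * w) ^ (pred (j - 2*l)) * Jtil (qA n l) (z * sqrt (1 - w ^ 2))
          + (z * w) ^ (S (j - 2*l)) * Jtil (qA n l + 1) (z * sqrt (1 - w ^ 2))))) end.
  - apply is_derive_scal. apply term_deriv; auto.
  - rewrite qA_1, qA_S. ring.
Qed.

Lemma div2_bounds i : (2 * Nat.div2 i <= i /\ i <= 2 * Nat.div2 i + 1)%nat.
Proof. pose proof (Nat.div2_odd i). destruct (Nat.odd i); simpl in *; lia. Qed.

Lemma fhat_eq n i s t : fhat n i s t = (-1) ^ (Nat.div2 n + i) * sqrt (PI / 2) * Sfun n i s t.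
Proof.
  pose proof (div2_bounds i).
  unfold fhat, Sfun. f_equal.
  rewrite (sumR_tail (S (Nat.div2 i)) (S i)).
  2: lia.
  2: { intros l Hl. rewrite A_out by lia. ring. }
  apply sumR_ext. intros l Hl. rewrite A_in by lia. ring.
Qed.

Lemma ftil_eq n j s t : ftil n (S j) s t = - sqrt (PI / 2) * INR (S j) * Sfun n j s t.
Proof.
  pose proof (div2_bounds j).
  assert (E : Nat.div2 (S j + 1) = S (Nat.div2 j)) by (replace (S j + 1)%nat with (j + 2)%nat by lia; apply div2_SS).
  unfold ftil, Sfun. rewrite E, Rmult_assoc. f_equal.
  rewrite (sumR_tail (S (Nat.div2 j)) (S j)).
  2: lia.
  2: { intros l Hl. rewrite A_out by lia. ring. }
  rewrite <- sumR_scal. apply sumR_ext. intros l Hl. rewrite A_in by lia.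
  replace (S j - 1 - 2 * l)%nat with (j - 2 * l)%nat by lia.
  rewrite factS, S_INR. unfold Rdiv. ring.
Qed.

Lemma gfun_eq n i s t : gfun n i s t = sqrt (PI / 2) * Sfun (n + 2) i s t.
Proof.
  pose proof (div2_bounds i).
  unfold gfun, Sfun. f_equal.
  rewrite (sumR_tail (S (Nat.div2 i)) (S i)).
  2: lia.
  2: { intros l Hl. rewrite A_out by lia. ring. }
  apply sumR_ext. intros l Hl. rewrite A_in by lia.
  replace (qB n l) with (qA (n + 2) l) by (unfold qA, qB; rewrite div2_SS; lia). ring.
Qed.

Lemma zDw_lin F n j c z w : z <> 0 -> -1 < w < 1 ->
  (forall w', polar F z w' = c * PSf n j z w') ->
  ex_derive (fun w' => polar F z w') w /\ zDw F z w = c * PSf (n + 2) (S j) z w.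
Proof.
  intros Hz Hw H.
  assert (D : is_derive (fun w' => polar F z w') w (c * (z * PSf (n + 2) (S j) z w))).
  { apply is_derive_ext with (fun w' => c * PSf n j z w'). intro; symmetry; apply H.
    apply is_derive_scal. apply core; auto. }
  split. eexists; exact D.
  unfold zDw. replace (Derive (fun w' => polar F z w') w) with (c * (z * PSf (n+2) (S j) z w)).
  field. auto. symmetry; apply is_derive_unique; exact D.
Qed.

Lemma polar_fhat n i z w : polar (fhat n i) z w = (-1) ^ (Nat.div2 n + i) * sqrt (PI / 2) * PSf n i z w.
Proof. unfold polar, PSf. apply fhat_eq. Qed.
Lemma polar_ftil n j z w : polar (ftil n (S j)) z w = - sqrt (PI / 2) * INR (S j) * PSf n j z w.
Proof. unfold polar, PSf. apply ftil_eq. Qed.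
Lemma polar_gfun n i z w : polar (gfun n i) z w = sqrt (PI / 2) * PSf (n + 2) i z w.
Proof. unfold polar, PSf. apply gfun_eq. Qed.

Lemma sign_shift m i : (-1) ^ (Nat.div2 (m + 2) + S i) = (-1) ^ (Nat.div2 m + i).
Proof.
  rewrite div2_SS. replace (S (Nat.div2 m) + S i)%nat with (Nat.div2 m + i + 2)%nat by lia.
  rewrite pow_add. simpl. ring.
Qed.

Theorem proposition4p1 (m : nat) (Hm_even : Nat.Even m) (Hm2 : (2 <= m)%nat) :
  (forall i : nat, (1 <= i <= m - 2)%nat ->
   forall z w : R, 0 < z -> -1 < w < 1 ->
     ex_derive (fun w' => polar (ftil m i) z w') w /\
     ex_derive (fun w' => polar (fhat m i) z w') w /\
     ex_derive (fun w' => polar (ftil (m + 2) (i + 1)) z w') w /\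
     polar (ftil (m + 2) (i + 1)) z w = (INR (i + 1) / INR i) * zDw (ftil m i) z w /\
     polar (fhat (m + 2) (i + 1)) z w = zDw (fhat m i) z w /\
     polar (gfun (m + 2) (i + 1)) z w = - / INR (i + 1) * zDw (ftil (m + 2) (i + 1)) z w)
  /\
  (forall z w : R, 0 < z -> -1 < w < 1 ->
     ex_derive (fun w' => polar (fhat m 0) z w') w /\
     ex_derive (fun w' => polar (ftil (m + 2) 1) z w') w /\
     polar (fhat (m + 2) 1) z w = zDw (fhat m 0) z w /\
     polar (gfun (m + 2) 1) z w = - zDw (ftil (m + 2) 1) z w)
  /\
  (forall s t : R, s <> 0 ->
     ftil (m + 2) 1 s t = (-1) ^ (Nat.div2 m - 1) * / s * fhat (m + 2) 1 s t).
Proof.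
  split; [|split].
  - intros i Hi z w Hz Hw. destruct i as [|j]; [lia|].
    replace (S j + 1)%nat with (S (S j)) by lia.
    assert (Hz' : z <> 0) by lra.
    destruct (zDw_lin (ftil m (S j)) m j _ z w Hz' Hw (polar_ftil m j z)) as [D1 E1].
    destruct (zDw_lin (fhat m (S j)) m (S j) _ z w Hz' Hw (polar_fhat m (S j) z)) as [D2 E2].
    destruct (zDw_lin (ftil (m + 2) (S (S j))) (m + 2) (S j) _ z w Hz' Hw (polar_ftil (m + 2) (S j) z)) as [D3 E3].
    repeat split; auto.
    + rewrite E1, polar_ftil. rewrite !S_INR. pose proof (pos_INR j). field. lra.
    + rewrite E2, polar_fhat, sign_shift. reflexivity.
    + rewrite E3, polar_gfun. rewrite !S_INR. pose proof (pos_INR j). field. lra.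
  - intros z w Hz Hw.
    assert (Hz' : z <> 0) by lra.
    destruct (zDw_lin (fhat m 0) m 0 _ z w Hz' Hw (polar_fhat m 0 z)) as [D2 E2].
    destruct (zDw_lin (ftil (m + 2) 1) (m + 2) 0 _ z w Hz' Hw (polar_ftil (m + 2) 0 z)) as [D3 E3].
    repeat split; auto.
    + rewrite E2, polar_fhat, sign_shift. reflexivity.
    + rewrite E3, polar_gfun. simpl INR. ring.
  - intros s t Hs. rewrite ftil_eq, fhat_eq.
    destruct m as [|[|m']]; try lia.
    replace (S (S m') + 2)%nat with (S (S (S (S m')))) by lia.
    change (Nat.div2 (S (S m'))) with (S (Nat.div2 m')).
    change (Nat.div2 (S (S (S (S m'))))) with (S (S (Nat.div2 m'))).
    set (k := Nat.div2 m').
    unfold Sfun, sumR. simpl. rewrite !A_0, (A_out 1 1) by lia.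
    replace (S k - 1)%nat with k by lia.
    replace (S (S k) + 1)%nat with (k + 3)%nat by lia. rewrite pow_add.
    assert (Hk : (-1) ^ k * (-1) ^ k = 1).
    { rewrite <- Rpow_mult_distr. replace (-1 * -1) with 1 by ring. apply pow1. }
    simpl pow. rewrite Nat.sub_0_r.
    set (J := Jtil (qA (S (S (S (S m')))) 0) t).
    transitivity (- ((-1) ^ k * (-1) ^ k) * sqrt (PI / 2) * J).
    + rewrite Hk. ring.
    + field. auto.
Qed.
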